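(* Fix a bandit $k$ and a labeling $L$, and let $H$ be one of the hypotheses RN, RA, RS. Suppose $q^k$ is entrywise nonnegative and transient and that $(q^k,r^k)$ satisfies $H$. Run the Triangularizer on bandit $k$ in accord with $L$. Then every execution of Step 2 is well defined (the current value $q(i,i)$ of the selected state $i$ satisfies $q(i,i)<1$), and after each execution of Step 2 the current data $(\bar q^k,\bar r^k)$, defined by writing the current tableau as $[(I-\bar q^k),\bar r^k]$, satisfy: $\bar q^k$ is entrywise nonnegative and transient, and $(\bar q^k,\bar r^k)$ satisfies the same hypothesis $H$.
   Context: Bandit $k$ has a finite state set $N_k$, real transition rates $q(i,j)$ ($i,j\in N_k$) forming the matrix $q^k$, and real rewards $r(i)$ forming the vector $r^k$. A square matrix is transient if its powers tend to $0$ entrywise. Hypotheses for bandit $k$: (RN) $q^k$ is substochastic, i.e. $\sum_{j\in N_k}q(i,j)\le 1$ for all $i\in N_k$; (RA) $r(i)\le 0$ for all $i\in N_k$; (RS) $r(i)\ge 0$ for all $i\in N_k$. Let $N$ be the union of the state sets of all bandits (pairwise disjoint) and $0\notin N$. A labeling is an injective map $L:N\cup\{0\}\to\{1,\dots,|N|+1\}$ with $L(0)=|N|+1$. Triangularizer for bandit $k$ in accord with $L$: start with the $|N_k|\times(|N_k|+1)$ tableau $T=[(I-q^k),r^k]$ (rows and first $|N_k|$ columns indexed by $N_k$, last column the reward column) and set $M=N_k$. At every stage write the current tableau as $[(I-q),r]$, thereby defining the current data $q(\cdot,\cdot)$, $r(\cdot)$. While $M\ne\emptyset$ do: Step 2: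 let $i\in M$ have the smallest label $L(i)$; set $\alpha=1/[1-q(i,i)]$ (current value); (a) replace row $i$ of the tableau by $\alpha$ times itself; (b) for each $j\in M\setminus\{i\}$, replace row $j$ by itself plus $q(j,i)$ (current value, before this step) times the updated row $i$. Step 3: replace $M$ by $M\setminus\{i\}$. *)

(* Defs.v *)
From HB Require Import structures.
From mathcomp Require Import all_boot all_order all_algebra.
Set Implicit Arguments. Unset Strict Implicit. Unset Printing Implicit Defensive.
Import Order.TTheory GRing.Theory Num.Theory.
Local Open Scope ring_scope.

Fixpoint mxpow (R : pzRingType) (n : nat) (A : 'M[R]_n) (m : nat) : 'M[R]_n :=
  if m is m'.+1 then A *m mxpow A m' else 1%:M.

Definition mx_nonneg (R : numDomainType) (n : nat) (A : 'M[R]_n) : Prop :=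
  forall i j, 0 <= A i j.

Definition transient (R : numDomainType) (n : nat) (A : 'M[R]_n) : Prop :=
  forall i j (eps : R), 0 < eps ->
    exists N : nat, forall m : nat, (N <= m)%N -> `|mxpow A m i j| < eps.

Inductive hyp := RN | RA | RS.

Definition sat_hyp (R : numDomainType) (n : nat) (H : hyp)
    (q : 'M[R]_n) (r : 'cV[R]_n) : Prop :=
  match H with
  | RN => forall i, \sum_(j < n) q i j <= 1
  | RA => forall i, r i 0 <= 0
  | RS => forall i, 0 <= r i 0
  end.

(* One execution of Step 2 of the Triangularizer, pivoting on state i, with
   current set M; the tableau is [(I - q), r] stored as the pair (A, b),
   so the current q is 1%:M - A and the current r is b. *)
Definition tri_step (R : fieldType) (n : nat) (M : {set 'I_n}) (i : 'I_n)
    (A : 'M[R]_n) (b : 'cV[R]_n) : 'M[R]_n * 'cV[R]_n :=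
  let q := 1%:M - A in
  let alpha := (1 - q i i)^-1 in
  (\matrix_(k, j) (if k == i then alpha * A i j
                   else if k \in M then A k j + q k i * (alpha * A i j)
                   else A k j),
   \col_k (if k == i then alpha * b i 0
           else if k \in M then b k 0 + q k i * (alpha * b i 0)
           else b k 0)).

Inductive tri_reachable (R : fieldType) (n : nat) (q0 : 'M[R]_n)
    (r0 : 'cV[R]_n) (L : 'I_n -> nat) :
    {set 'I_n} -> 'M[R]_n -> 'cV[R]_n -> Prop :=
| tri_reach0 : tri_reachable q0 r0 L setT (1%:M - q0) r0
| tri_reachS M A b i :
    tri_reachable q0 r0 L M A b -> i \in M ->
    (forall j, j \in M -> (L i <= L j)%N) ->
    tri_reachable q0 r0 L (M :\ i) (tri_step M i A b).1 (tri_step M i A b).2.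

(* Main.v *)
Require Import Defs.
From HB Require Import structures.
From mathcomp Require Import all_boot all_order all_algebra.
From mathcomp Require Import ring lra.
Import Order.TTheory GRing.Theory Num.Theory.
Local Open Scope ring_scope.

Lemma bernoulli (R : realFieldType) (t : R) (m : nat) : 0 <= t ->
  1 + m%:R * t <= (1 + t) ^+ m.
Proof.
move=> t0; elim: m => [|m IH]; first by rewrite mul0r addr0 expr0.
rewrite exprS mulrS.
have h1 : 0 <= 1 + t by lra.
have h2 : 0 <= m%:R * t by rewrite mulr_ge0.
have := ler_wpM2l h1 IH. nra.
Qed.

Lemma pow_small (R : archiRealFieldType) (c eps : R) :
  0 <= c -> c < 1 -> 0 < eps -> exists N : nat, c ^+ N < eps.
Proof.
move=> c0 c1 e0.
have [->|cn0] := eqVneq c 0; first by exists 1%N; rewrite expr1.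
have cp : 0 < c by rewrite lt0r cn0.
set t := c^-1 - 1.
have ct : c * (1 + t) = 1 by rewrite /t addrC subrK mulfV.
have tp : 0 < t by rewrite /t subr_gt0 invf_gt1.
have pos : 0 < eps^-1 / t by rewrite divr_gt0 // invr_gt0.
have hb := archi_boundP (ltW pos).
set N := Num.Def.archi_bound _ in hb.
exists N.
have hB := @bernoulli _ t N (ltW tp).
have e1 : eps^-1 < N%:R * t.
  by move: hb; rewrite ltr_pdivrMr.
have hX : eps^-1 < (1 + t) ^+ N by lra.
have hX2 : 1 < eps * (1 + t) ^+ N.
  by rewrite -ltr_pdivrMl // mulrC mul1r.
have hy : c ^+ N * (1 + t) ^+ N = 1 by rewrite -exprMn ct expr1n.
have yp : 0 < c ^+ N by rewrite exprn_gt0.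
have : 0 < c ^+ N * (eps * (1 + t) ^+ N - 1) by rewrite mulr_gt0 // subr_gt0.
nra.
Qed.

Lemma common_bound (T : finType) (P : T -> nat -> Prop) :
  (forall t, exists N, forall m, (N <= m)%N -> P t m) ->
  exists N, forall t m, (N <= m)%N -> P t m.
Proof.
move=> H.
suff: forall s : seq T, exists N, forall t m, t \in s -> (N <= m)%N -> P t m.
  by case/(_ (enum T)) => N HN; exists N => t m; apply: HN; rewrite mem_enum.
elim=> [|a s [N HN]]; first by exists 0%N.
have [Na HNa] := H a.
exists (maxn N Na) => t m; rewrite inE => /orP [/eqP-> | ts] le.
- by apply: HNa; exact: leq_trans (leq_maxr _ _) le.
- by apply: HN => //; exact: leq_trans (leq_maxl _ _) le.
Qed.


Lemma mxpow_nonneg (R : numFieldType) n (Q : 'M[R]_n) m :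
  mx_nonneg Q -> mx_nonneg (mxpow Q m).
Proof.
move=> Qn; elim: m => [|m IH] i j /=.
  by rewrite mxE ler0n.
by rewrite mxE sumr_ge0 // => l _; rewrite mulr_ge0.
Qed.

Lemma transient_vec (R : archiRealFieldType) n (Q : 'M[R]_n) :
  mx_nonneg Q -> transient Q ->
  exists x : 'cV[R]_n, (forall k, 0 < x k 0) /\ (forall k, (Q *m x) k 0 < x k 0).
Proof.
move=> Qn Qt.
case: n Q Qn Qt => [|n] Q Qn Qt; first by exists 0; split => -[].
set eps := (n.+1%:R : R)^-1.
have ep : 0 < eps by rewrite invr_gt0 ltr0n.
have [N HN] := @common_bound ('I_n.+1 * 'I_n.+1)%type
   (fun t m => `|mxpow Q m t.1 t.2| < eps) (fun t => Qt t.1 t.2 eps ep).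
set e := const_mx 1 : 'cV[R]_n.+1.
have tele : forall m, \sum_(k < m) mxpow Q k *m e + mxpow Q m *m e
     = e + Q *m \sum_(k < m) mxpow Q k *m e.
  elim => [|m IH]; first by rewrite big_ord0 add0r mulmx0 addr0 /= mul1mx.
  by rewrite big_ord_recr /= mulmxDr addrA -IH mulmxA.
set x := \sum_(k < N.+1) mxpow Q k *m e.
have Pe : forall m k, 0 <= (mxpow Q m *m e) k 0.
  move=> m k; rewrite mxE sumr_ge0 // => l _; rewrite mulr_ge0 //.
    exact: (@mxpow_nonneg _ _ Q m Qn).
  by rewrite mxE.
exists x; split.
- move=> k; rewrite /x summxE big_ord_recl /= mul1mx.
  have : 0 <= \sum_(i < N) (mxpow Q (bump 0 i) *m e) k 0.
    by rewrite sumr_ge0.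
  rewrite [e k 0]mxE; lra.
- move=> k.
  have h2 : Q *m x = x + mxpow Q N.+1 *m e - e.
    by rewrite tele [e + _]addrC addrK.
  have hs : (mxpow Q N.+1 *m e) k 0 < 1.
    rewrite mxE.
    have -> : (1 : R) = \sum_(j < n.+1) eps.
      by rewrite sumr_const card_ord -mulr_natl mulfV // pnatr_eq0.
    apply: ltr_sum; first by apply/hasP; exists ord0; rewrite ?mem_index_enum.
    move=> j _; rewrite [e _ _]mxE mulr1.
    have := HN (k, j) N.+1 (leqnSn _) => /=.
    by rewrite ger0_norm //; exact: (@mxpow_nonneg _ _ Q N.+1 Qn).
  rewrite h2 [(_ + _ - _ : 'cV[R]_n.+1) k 0]mxE [(_ + _ : 'cV[R]_n.+1) k 0]mxE [(- e) k 0]mxE [e k 0]mxE.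
  lra.
Qed.


Lemma vec_transient (R : archiRealFieldType) n (Q : 'M[R]_n) (x : 'cV[R]_n) :
  mx_nonneg Q -> (forall k, 0 < x k 0) -> (forall k, (Q *m x) k 0 < x k 0) ->
  transient Q.
Proof.
move=> Qn xp Qx i j eps ep.
have Qxn : forall k, 0 <= (Q *m x) k 0.
  by move=> k; rewrite mxE sumr_ge0 // => l _; rewrite mulr_ge0 // ltW.
have [c [c0 [c1 hc]]] : exists c : R, 0 <= c /\ c < 1 /\
    forall k, (Q *m x) k 0 <= c * x k 0.
  suff: forall s : seq 'I_n, exists c : R, 0 <= c /\ c < 1 /\
      forall k, k \in s -> (Q *m x) k 0 <= c * x k 0.
    case/(_ (enum 'I_n)) => c [? [? h]]; exists c; do 2 split => //.
    by move=> k; apply h; rewrite mem_enum.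
  elim=> [|a s [c [c0 [c1 h]]]]; first by exists 0; rewrite lexx ltr01.
  set d := (Q *m x) a 0 / x a 0.
  have d0 : 0 <= d by rewrite divr_ge0 // ltW.
  have d1 : d < 1 by rewrite ltr_pdivrMr // mul1r.
  have hd : (Q *m x) a 0 <= d * x a 0 by rewrite -ler_pdivrMr.
  have [cd|dc] := lerP c d.
  - exists d; do 2 split => //; move=> k; rewrite inE => /orP [/eqP -> //| ks].
    by apply: le_trans (h k ks) _; rewrite ler_wpM2r // ltW.
  - exists c; do 2 split => //; move=> k; rewrite inE => /orP [/eqP -> | ks].
      by apply: le_trans hd _; rewrite ler_wpM2r // ltW.
    exact: h.
have powx : forall m k, (mxpow Q m *m x) k 0 <= c ^+ m * x k 0.
  elim=> [|m IH] k; first by rewrite /= mul1mx expr0 mul1r.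
  have -> : mxpow Q m.+1 *m x = Q *m (mxpow Q m *m x) by rewrite /= mulmxA.
  rewrite [X in X <= _]mxE.
  apply: le_trans (_ : \sum_l Q k l * (c ^+ m * x l 0) <= _).
    by apply: ler_sum => l _; apply: ler_wpM2l.
  under eq_bigr do rewrite mulrCA.
  rewrite -mulr_sumr exprSr -mulrA ler_wpM2l ?exprn_ge0 //.
  by have := hc k; rewrite mxE.
have entry : forall m, mxpow Q m i j * x j 0 <= c ^+ m * x i 0.
  move=> m; apply: le_trans (powx m i).
  rewrite [X in _ <= X]mxE (bigD1 j) //= lerDl sumr_ge0 // => l _.
  by apply: mulr_ge0; [exact: (@mxpow_nonneg _ _ Q m Qn _ _) | exact: ltW].
have pe : 0 < eps * x j 0 / x i 0 by rewrite divr_gt0 // mulr_gt0.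
have [N hN] := @pow_small _ _ _ c0 c1 pe.
exists N => m Nm.
rewrite ger0_norm; last by apply: (@mxpow_nonneg _ _ Q m Qn _ _).
have h1 : mxpow Q m i j <= c ^+ m * x i 0 / x j 0 by rewrite ler_pdivlMr.
have h2 : c ^+ m <= c ^+ N := ler_wiXn2l c0 (ltW c1) Nm.
have h3 : c ^+ N * x i 0 < eps * x j 0 by move: hN; rewrite ltr_pdivlMr.
apply: le_lt_trans h1 _; rewrite ltr_pdivrMr //; apply: le_lt_trans h3.
by rewrite ler_wpM2r // ltW.
Qed.


Section Step.
Variable R : realFieldType.
Variable n : nat.
Implicit Types (A : 'M[R]_n) (b x : 'cV[R]_n) (M : {set 'I_n}) (i k j : 'I_n).

Lemma qE A k j : (1%:M - A) k j = (k == j)%:R - A k j.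
Proof. by rewrite !mxE. Qed.

Lemma alphaE A i : 1 - (1%:M - A) i i = A i i.
Proof. rewrite qE eqxx /=; ring. Qed.

Lemma step_col M i A b k : (tri_step M i A b).2 k 0 =
  if k == i then (A i i)^-1 * b i 0
  else if k \in M then b k 0 + (- A k i) * ((A i i)^-1 * b i 0) else b k 0.
Proof.
rewrite /tri_step /= mxE alphaE.
case: (eqVneq k i) => [_|ki] //=.
by have -> : (1%:M - A) k i = - A k i by rewrite qE (negbTE ki) sub0r.
Qed.

Lemma step_mat M i A b k j : (tri_step M i A b).1 k j =
  if k == i then (A i i)^-1 * A i j
  else if k \in M then A k j + (- A k i) * ((A i i)^-1 * A i j) else A k j.
Proof.
rewrite /tri_step /= mxE alphaE.
case: (eqVneq k i) => [_|ki] //=.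
by have -> : (1%:M - A) k i = - A k i by rewrite qE (negbTE ki) sub0r.
Qed.

Lemma step_mul M i A b x :
  (tri_step M i A b).1 *m x = (tri_step M i A (A *m x)).2.
Proof.
apply/matrixP => k z; rewrite (ord1 z) step_col mxE.
under eq_bigr do rewrite step_mat.
have [_|ki] := eqVneq k i => /=.
  by under eq_bigr do rewrite -mulrA; rewrite -mulr_sumr mxE.
case: (k \in M) => /=; last by rewrite mxE.
under eq_bigr do rewrite mulrDl.
rewrite big_split /= !mxE; congr (_ + _).
rewrite mulr_sumr mulr_sumr; apply: eq_bigr => j _; ring.
Qed.

Lemma hoff A : mx_nonneg (1%:M - A) -> forall k j, k != j -> A k j <= 0.
Proof. by move=> Qn k j kj; have := Qn k j; rewrite qE (negbTE kj) /=; lra. Qed.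

Lemma step_nonneg M i A b : mx_nonneg (1%:M - A) -> 0 < A i i ->
  mx_nonneg (1%:M - (tri_step M i A b).1).
Proof.
move=> Qn ai k j; rewrite qE step_mat.
have ho := @hoff A Qn.
have ia : 0 < (A i i)^-1 by rewrite invr_gt0.
have ainv : (A i i)^-1 * A i i = 1 by rewrite mulVf // gt_eqF.
have [->|ki] := eqVneq k i => /=.
  have [->|ji] := eqVneq j i; first by rewrite ?eqxx /= ainv subrr.
  rewrite /= sub0r -mulrN; apply: mulr_ge0; first exact: ltW.
  by rewrite oppr_ge0; apply: ho; rewrite eq_sym.
case: (k \in M) => /=; last by rewrite -qE.
have [->|ji] := eqVneq j i.
  by rewrite ?(negbTE ki) /= ainv mulr1 subrr subrr.
have h1 := Qn k j; rewrite qE in h1.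
have h2 : 0 <= (- A k i) * ((A i i)^-1 * - A i j).
  apply: mulr_ge0; first by rewrite oppr_ge0; apply: ho.
  apply: mulr_ge0; first exact: ltW.
  by rewrite oppr_ge0; apply: ho; rewrite eq_sym.
have e : (- A k i) * ((A i i)^-1 * - A i j) = - ((- A k i) * ((A i i)^-1 * A i j)) by ring.
set d := (k == j)%:R in h1 *; lra.
Qed.

Lemma step_col_ge0 M i A b : mx_nonneg (1%:M - A) -> 0 < A i i ->
  (forall k, 0 <= b k 0) -> forall k, 0 <= (tri_step M i A b).2 k 0.
Proof.
move=> Qn ai bp k; rewrite step_col.
have ia : 0 < (A i i)^-1 by rewrite invr_gt0.
have [_|ki] := eqVneq k i => /=; first by rewrite mulr_ge0 // ltW.
case: (k \in M) => //=.
have : 0 <= - A k i * ((A i i)^-1 * b i 0).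
  apply: mulr_ge0; first by rewrite oppr_ge0; apply: (@hoff A Qn).
  by apply: mulr_ge0 => //; apply: ltW.
have := bp k; lra.
Qed.

Lemma step_col_gt0 M i A b : mx_nonneg (1%:M - A) -> 0 < A i i ->
  (forall k, 0 < b k 0) -> forall k, 0 < (tri_step M i A b).2 k 0.
Proof.
move=> Qn ai bp k; rewrite step_col.
have ia : 0 < (A i i)^-1 by rewrite invr_gt0.
have [_|ki] := eqVneq k i => /=; first by rewrite mulr_gt0.
case: (k \in M) => //=.
have : 0 <= - A k i * ((A i i)^-1 * b i 0).
  apply: mulr_ge0; first by rewrite oppr_ge0; apply: (@hoff A Qn).
  by apply: mulr_ge0; apply: ltW.
have := bp k; lra.
Qed.

Lemma step_col_le0 M i A b : mx_nonneg (1%:M - A) -> 0 < A i i ->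
  (forall k, b k 0 <= 0) -> forall k, (tri_step M i A b).2 k 0 <= 0.
Proof.
move=> Qn ai bp k; rewrite step_col.
have ia : 0 < (A i i)^-1 by rewrite invr_gt0.
have [_|ki] := eqVneq k i => /=; first by rewrite mulr_ge0_le0 // ltW.
case: (k \in M) => //=.
have : - A k i * ((A i i)^-1 * b i 0) <= 0.
  apply: mulr_ge0_le0; first by rewrite oppr_ge0; apply: (@hoff A Qn).
  by apply: mulr_ge0_le0 => //; exact: ltW.
have := bp k; lra.
Qed.

Lemma diag_pos A x i : mx_nonneg (1%:M - A) -> (forall k, 0 < x k 0) ->
  0 < (A *m x) i 0 -> 0 < A i i.
Proof.
move=> Qn xp; rewrite mxE (bigD1 i) //=.
have : \sum_(j | j != i) A i j * x j 0 <= 0.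
  by apply: sumr_le0 => j ji; rewrite mulr_le0_ge0 ?(@hoff A Qn) 1?eq_sym // ltW.
move=> h1 h2; have : 0 < A i i * x i 0 by lra.
by rewrite pmulr_lgt0.
Qed.

Lemma rowsumE A k :
  \sum_j (1%:M - A) k j = 1 - (A *m (const_mx 1 : 'cV[R]_n)) k 0.
Proof.
have -> : \sum_j (1%:M - A) k j = ((1%:M - A) *m (const_mx 1 : 'cV[R]_n)) k 0.
  by rewrite [RHS]mxE; apply: eq_bigr => j _; rewrite [(const_mx 1 : 'cV[R]_n) j 0]mxE mulr1.
rewrite mulmxBl mul1mx [(_ - _ : 'cV[R]_n) k 0]mxE [(const_mx 1 : 'cV[R]_n) k 0]mxE.
by rewrite [(- _ : 'cV[R]_n) k 0]mxE.
Qed.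

End Step.

Theorem proposition3p1 (R : archiRealFieldType) (n : nat)
    (q : 'M[R]_n) (r : 'cV[R]_n) (L : 'I_n -> nat) (L_inj : injective L)
    (H : hyp) :
  mx_nonneg q -> transient q -> sat_hyp H q r ->
  forall (M : {set 'I_n}) (A : 'M[R]_n) (b : 'cV[R]_n),
    tri_reachable q r L M A b ->
    (forall i, i \in M -> (forall j, j \in M -> (L i <= L j)%N) ->
       (1%:M - A) i i < 1) /\
    mx_nonneg (1%:M - A) /\ transient (1%:M - A) /\ sat_hyp H (1%:M - A) b.
Proof.
move=> qn qt hq M A b Hr.
have [x [xp qx]] := @transient_vec R n q qn qt.
have inv : mx_nonneg (1%:M - A) /\ (forall k, 0 < (A *m x) k 0) /\
    sat_hyp H (1%:M - A) b.
  elim: Hr => [|M' A' b' i _ [Qn [sl sh]] iM imin].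
  - have qq : 1%:M - (1%:M - q) = q by rewrite opprB addrC subrK.
    rewrite qq; split => //; split => // k.
    rewrite mulmxBl mul1mx [(_ - _ : 'cV[R]_n) k 0]mxE [(- _ : 'cV[R]_n) k 0]mxE.
    by rewrite subr_gt0.
  - have ai : 0 < A' i i := @diag_pos _ _ A' x i Qn xp (sl i).
    split; first exact: step_nonneg.
    split; first by move=> k; rewrite step_mul; apply: step_col_gt0.
    have hm := @step_mul _ _ M' i A' b'.
    set A2 := (tri_step M' i A' b').1 in hm *; set b2 := (tri_step M' i A' b').2.
    have hc0 := @step_col_ge0 _ _ M' i A' b' Qn ai.
    have hc1 := @step_col_le0 _ _ M' i A' b' Qn ai.
    rewrite -/b2 in hc0 hc1.
    move: hq sh; case: H => /= _ sh.
    + have h0 : forall k : 'I_n, 0 <= (A' *m (const_mx 1 : 'cV[R]_n)) k 0.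
        by move=> k; have := sh k; rewrite rowsumE; lra.
      move=> k; rewrite rowsumE hm.
      have := @step_col_ge0 _ _ M' i A' (A' *m (const_mx 1 : 'cV[R]_n)) Qn ai h0 k; lra.
    + exact: hc1.
    + exact: hc0.
case: inv => [Qn [sl sh]].
split.
  move=> i _ _; rewrite qE eqxx /=.
  have := @diag_pos _ _ A x i Qn xp (sl i); lra.
split => //; split => //.
apply: (@vec_transient _ _ (1%:M - A) x) => // k.
rewrite mulmxBl mul1mx [(_ - _ : 'cV[R]_n) k 0]mxE [(- _ : 'cV[R]_n) k 0]mxE.
have := sl k; lra.
Qed.
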